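(* Let $S_0,S_1$ be semi-infinite stacks that are neighbors. Then for every finite word $W$ in $\Theta$, the stacks $\overline{S_0W}$ and $\overline{S_1W}$ are neighbors.
   Context: Fix an integer $k\ge 2$. Let $\Theta=\{b_1,\dots,b_k,o_1,\dots,o_k,F\}$, where $b_i$ is a burger of type $i$, $o_i$ is an order of type $i$, and $F$ is a flexible order. A semi-infinite stack is an infinite sequence of burgers indexed to the left, i.e. of the form $\cdots s_3s_2s_1$ with $s_1$ the rightmost (top) burger. For a stack $S$ and a finite word $W$, $\overline{SW}$ is obtained by processing $W$ left to right: - a burger is appended on the right; - $o_i$ removes the rightmost $b_i$ present at that time; - $F$ removes the rightmost burger present at that time. (Assume the stacks contain infinitely many burgers of each type, so that every order can be fulfilled.) Two semi-infinite stacks are neighbors if one can be obtained from the other by deleting a single burger, at an arbitrary position. *)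

(* Defs.v *)
From mathcomp Require Import all_boot.
From Stdlib Require Import ClassicalEpsilon.
Set Implicit Arguments. Unset Strict Implicit. Unset Printing Implicit Defensive.

(* Burger types are 'I_k.  A semi-infinite stack ... s_3 s_2 s_1 is a
   function S : nat -> 'I_k with S 0 = s_1 the top (rightmost) burger,
   S 1 = s_2, etc. *)
Definition stack (k : nat) := nat -> 'I_k.

Inductive letter (k : nat) : Type :=
  | Burger of 'I_k
  | Order of 'I_k
  | Flex.

Definition all_types_infinite k (S : stack k) : Prop :=
  forall (i : 'I_k) (n : nat), exists m, n <= m /\ S m = i.

(* Delete the burger at position j (counted from the top, 0 = top). *)
Definition delete k (j : nat) (S : stack k) : stack k :=
  fun n => if n < j then S n else S n.+1.

Definition push k (b : 'I_k) (S : stack k) : stack k :=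
  fun n => if n is m.+1 then S m else b.

(* Position of the rightmost (topmost) burger of type i; 0 if there is
   none (never happens under all_types_infinite). *)
Definition first_occ k (S : stack k) (i : 'I_k) : nat :=
  match excluded_middle_informative (exists n, S n == i) with
  | left H => ex_minn H
  | right _ => 0
  end.

Definition step k (S : stack k) (t : letter k) : stack k :=
  match t with
  | Burger b => push b S
  | Order i => delete (first_occ S i) S
  | Flex => delete 0 S
  end.

Definition process k (S : stack k) (W : seq (letter k)) : stack k :=
  foldl (@step k) S W.

Definition neighbors k (S T : stack k) : Prop :=
  (exists j, forall n, T n = delete j S n) \/
  (exists j, forall n, S n = delete j T n).

(* Main.v *)
From Stdlib Require Import FunctionalExtensionality ClassicalEpsilon.
Require Import Defs.
From mathcomp Require Import all_boot.
From mathcomp Require Import zify.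

Ltac fin := repeat (case: ifP => ?); try reflexivity; try (exfalso; lia); try (congr (_ _); lia).

Lemma del_comm k (S : stack k) a b : b <= a ->
  delete a (delete b S) = delete b (delete a.+1 S).
Proof. move=> hab; apply: functional_extensionality => n; rewrite /delete; fin. Qed.

Lemma push_del k (S : stack k) c j : push c (delete j S) = delete j.+1 (push c S).
Proof. apply: functional_extensionality => n; rewrite /delete /push; case: n => [|n] //=; fin. Qed.

Lemma first_occ_spec k (S : stack k) i m : S m = i -> (forall n, n < m -> S n <> i) ->
  first_occ S i = m.
Proof.
move=> Hm Hlt; rewrite /first_occ; case: excluded_middle_informative => [H|H];
  last by exfalso; apply H; exists m; apply/eqP.
case: ex_minnP => p /eqP Hp Hmin.
have h1 : p <= m by apply Hmin; apply/eqP.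
case: (ltnP p m) => h2; first by exfalso; exact: (Hlt p h2 Hp).
lia.
Qed.

Lemma first_occ_ex k (S : stack k) i : (exists n, S n = i) ->
  S (first_occ S i) = i /\ forall n, n < first_occ S i -> S n <> i.
Proof.
move=> [m Hm]; rewrite /first_occ; case: excluded_middle_informative => [H|H];
  last by exfalso; apply H; exists m; apply/eqP.
case: ex_minnP => p /eqP Hp Hmin; split => // n hn Hn.
have := Hmin n (introT eqP Hn); lia.
Qed.

Lemma inf_del k (S : stack k) j : all_types_infinite S -> all_types_infinite (delete j S).
Proof.
move=> h i n; have [m [hm Hm]] := h i (maxn n j).+1.
exists m.-1; rewrite /delete; have -> : (m.-1 < j) = false by lia.
split; first lia. by have -> : m.-1.+1 = m by lia.
Qed.

Lemma inf_step k (S : stack k) t : all_types_infinite S -> all_types_infinite (step S t).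
Proof.
move=> h; case: t => [b|i|] /=; try exact: inf_del.
move=> i n; have [m [hm Hm]] := h i n; exists m.+1; split => //; lia.
Qed.

Lemma stepN k (S : stack k) j t : all_types_infinite S ->
  exists j', step (delete j S) t = delete j' (step S t).
Proof.
move=> hS; case: t => [b|i|] /=.
- by exists j.+1; exact: push_del.
- have hex : exists n, S n = i by have [m [_ e]] := hS i 0; exists m.
  have [Hp Hlt] := @first_occ_ex _ S i hex.
  set p := first_occ S i in Hp Hlt *.
  case: (ltngtP j p) => hjp.
  + have -> : first_occ (delete j S) i = p.-1.
      apply: first_occ_spec.
        rewrite /delete; have -> : (p.-1 < j) = false by lia.
        by have -> : p.-1.+1 = p by lia.
      move=> n hn; rewrite /delete; case: ifP => ?; [apply: Hlt; lia| try (exfalso; lia)]; apply: Hlt; lia.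
    exists j; have {2}-> : p = p.-1.+1 by lia.
    apply: del_comm; lia.
  + have -> : first_occ (delete j S) i = p.
      apply: first_occ_spec; first by rewrite /delete hjp.
      move=> n hn; rewrite /delete; case: ifP => ?; [apply: Hlt; lia| try (exfalso; lia)]; apply: Hlt; lia.
    exists j.-1; case: j hjp => [|j] hjp; first lia.
    symmetry; apply: del_comm; lia.
  + by subst j; exists (first_occ (delete p S) i).
- case: j => [|j]; first by exists 0.
  exists j; symmetry; apply: del_comm; lia.
Qed.

Lemma procN k (S : stack k) j W : all_types_infinite S ->
  exists j', process (delete j S) W = delete j' (process S W).
Proof.
elim: W S j => [|t W IH] S j hS /=; first by exists j.
have [jj ->] := @stepN _ S j t hS.
exact: IH (@inf_step _ S t hS).
Qed.

Theorem lemma5p3 (k : nat) (hk : 2 <= k) (S0 S1 : stack k)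
    (h0 : all_types_infinite S0) (h1 : all_types_infinite S1)
    (hn : neighbors S0 S1) (W : seq (letter k)) :
  neighbors (process S0 W) (process S1 W).
Proof.
case: hn => [[j Hj]|[j Hj]].
- have -> : S1 = delete j S0 by apply: functional_extensionality.
  have [j' ->] := @procN _ S0 j W h0. by left; exists j'.
- have -> : S0 = delete j S1 by apply: functional_extensionality.
  have [j' ->] := @procN _ S1 j W h1. by right; exists j'.
Qed.
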